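(* In the setting of the context, the contamination of $\widehat{\boldsymbol\alpha}_{2,\mathsf{real}}$ satisfies $$\mathsf{CN}_r(t)=\sqrt{\mathbf z_t^\top\mathbf C\,\mathbf z_t}=|1-\mathsf{SU}_r(t)|\sqrt{\mathbf z_t^\top\widetilde{\mathbf C}\,\mathbf z_t},$$ where $\mathbf C=\mathbf A^{-1}\big(\sum_{j\ne t}\lambda_j^2\mathbf z_j\mathbf z_j^\top\big)\mathbf A^{-1}$ and $\widetilde{\mathbf C}=\mathbf A_{-t}^{-1}\big(\sum_{j\ne t}\lambda_j^2\mathbf z_j\mathbf z_j^\top\big)\mathbf A_{-t}^{-1}$.
   Context: Setting: $d\ge n$, $\lambda_1,\dots,\lambda_d>0$; $\mathbf z_1,\dots,\mathbf z_d$ i.i.d. $\mathcal N(\mathbf0,\mathbf I_n)$; $\boldsymbol\Phi_{\mathsf{train}}=[\sqrt{\lambda_1}\mathbf z_1,\dots,\sqrt{\lambda_d}\mathbf z_d]$ (rows i.i.d. $\mathcal N(\mathbf0,\mathrm{diag}(\lambda))$); $\mathbf A=\sum_j\lambda_j\mathbf z_j\mathbf z_j^\top$, $\mathbf A_{-t}=\sum_{j\ne t}\lambda_j\mathbf z_j\mathbf z_j^\top$. Target $\boldsymbol\alpha^*=\mathbf e_t/\sqrt{\lambda_t}$, so the real outputs are $\mathbf Z_{\mathsf{train}}=\mathbf z_t$. $\widehat{\boldsymbol\alpha}_{2,\mathsf{real}}$ is the minimum-$\ell_2$-norm solution of $\boldsymbol\Phi_{\mathsf{train}}\boldsymbol\alpha=\mathbf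 z_t$; $\mathsf{SU}_r(t)=\sqrt{\lambda_t}(\widehat{\boldsymbol\alpha}_{2,\mathsf{real}})_t$, $\mathsf{CN}_r(t)=\sqrt{\sum_{j\ne t}\lambda_j(\widehat{\boldsymbol\alpha}_{2,\mathsf{real}})_j^2}$. *)

(* Defs.v *)
From HB Require Import structures.
From mathcomp Require Import all_boot all_order all_algebra.
Set Implicit Arguments. Unset Strict Implicit. Unset Printing Implicit Defensive.
Import Order.TTheory GRing.Theory Num.Theory.
Local Open Scope ring_scope.

Section Defs.
Variables (R : rcfType) (n d : nat).

Definition Phi_train (Z : 'M[R]_(n, d)) (lam : 'I_d -> R) : 'M[R]_(n, d) :=
  \matrix_(i < n, j < d) (Num.sqrt (lam j) * Z i j).

Definition outer (z : 'cV[R]_n) : 'M[R]_n := z *m z^T.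

Definition Amat (Z : 'M[R]_(n, d)) (lam : 'I_d -> R) : 'M[R]_n :=
  \sum_(j < d) lam j *: outer (col j Z).

Definition Amat_minus (Z : 'M[R]_(n, d)) (lam : 'I_d -> R) (t : 'I_d) : 'M[R]_n :=
  \sum_(j < d | j != t) lam j *: outer (col j Z).

Definition Smat (Z : 'M[R]_(n, d)) (lam : 'I_d -> R) (t : 'I_d) : 'M[R]_n :=
  \sum_(j < d | j != t) (lam j ^+ 2) *: outer (col j Z).

Definition Cmat Z lam t : 'M[R]_n :=
  invmx (Amat Z lam) *m Smat Z lam t *m invmx (Amat Z lam).

Definition Ctilde Z lam t : 'M[R]_n :=
  invmx (Amat_minus Z lam t) *m Smat Z lam t *m invmx (Amat_minus Z lam t).

Definition qform (M : 'M[R]_n) (z : 'cV[R]_n) : R := (z^T *m M *m z) 0 0.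

Definition sqnorm m (v : 'cV[R]_m) : R := \sum_(i < m) v i 0 ^+ 2.

Definition is_min_norm_solution m (Phi : 'M[R]_(m, d)) (y : 'cV[R]_m)
  (alpha : 'cV[R]_d) : Prop :=
  Phi *m alpha = y /\
  forall beta : 'cV[R]_d, Phi *m beta = y -> sqnorm alpha <= sqnorm beta.

Definition SU (lam : 'I_d -> R) (t : 'I_d) (alpha : 'cV[R]_d) : R :=
  Num.sqrt (lam t) * alpha t 0.

Definition CN (lam : 'I_d -> R) (t : 'I_d) (alpha : 'cV[R]_d) : R :=
  Num.sqrt (\sum_(j < d | j != t) lam j * alpha j 0 ^+ 2).

End Defs.

(* Main.v *)
Require Import Defs.
From HB Require Import structures.
From mathcomp Require Import all_boot all_order all_algebra ring lra.
Import Order.TTheory GRing.Theory Num.Theory.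
Local Open Scope ring_scope.

Section H.
Variables (R : rcfType) (n d : nat) (Z : 'M[R]_(n, d)).

Lemma outer_sym (z : 'cV[R]_n) : (outer z)^T = outer z.
Proof. by rewrite /outer trmx_mul trmxK. Qed.

Lemma sum_sym (P : pred 'I_d) (c : 'I_d -> R) :
  (\sum_(j < d | P j) c j *: outer (col j Z))^T =
  \sum_(j < d | P j) c j *: outer (col j Z).
Proof.
apply/matrixP => i k; rewrite mxE !summxE; apply: eq_bigr => j _.
rewrite !mxE; congr (_ * _); apply: eq_bigr => l _; by rewrite !mxE mulrC.
Qed.

Lemma colT_entry (j : 'I_d) (w : 'cV[R]_n) :
  ((col j Z)^T *m w) 0 0 = (Z^T *m w) j 0.
Proof. by rewrite !mxE; apply: eq_bigr => i _; rewrite !mxE. Qed.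

Lemma qsum (P : pred 'I_d) (c : 'I_d -> R) (v w : 'cV[R]_n) :
  (v^T *m (\sum_(j < d | P j) c j *: outer (col j Z)) *m w) 0 0 =
  \sum_(j < d | P j) c j * ((Z^T *m v) j 0 * (Z^T *m w) j 0).
Proof.
rewrite mulmx_sumr mulmx_suml summxE; apply: eq_bigr => j _.
rewrite -scalemxAr -scalemxAl mxE; congr (_ * _).
rewrite /outer mulmxA -(mulmxA (v^T *m col j Z)).
set a := v^T *m col j Z; set b := (col j Z)^T *m w.
rewrite (mx11_scalar a) (mx11_scalar b) mul_scalar_mx mxE.
rewrite /a /b colT_entry -colT_entry !mxE; congr (_ * _);
  apply: eq_bigr => i _; rewrite !mxE mulrC //.
Qed.

Lemma sqnorm_mx m (v : 'cV[R]_m) : sqnorm v = (v^T *m v) 0 0.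
Proof. by rewrite /sqnorm mxE; apply: eq_bigr => i _; rewrite !mxE expr2. Qed.

Lemma sqnormD m (a b : 'cV[R]_m) :
  sqnorm (a + b) = sqnorm a + 2 * (a^T *m b) 0 0 + sqnorm b.
Proof.
rewrite /sqnorm mxE mulr_sumr -!big_split; apply: eq_bigr => i _.
rewrite !mxE /=; ring.
Qed.

Lemma sqnorm_ge0 m (a : 'cV[R]_m) : 0 <= sqnorm a.
Proof. by apply: sumr_ge0 => i _; rewrite sqr_ge0. Qed.

Lemma sqnorm_eq0 m (a : 'cV[R]_m) : sqnorm a = 0 -> a = 0.
Proof.
move=> h; apply/matrixP => i j; rewrite (ord1 j) mxE.
have := psumr_eq0P (fun i _ => sqr_ge0 (a i 0)) h (i:=i) isT.
by move/eqP; rewrite sqrf_eq0 => /eqP.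
Qed.

Lemma PhiPhiT (lam : 'I_d -> R) : (forall j, 0 < lam j) ->
  Phi_train Z lam *m (Phi_train Z lam)^T = Amat Z lam.
Proof.
move=> hl; apply/matrixP => i k; rewrite !mxE summxE; apply: eq_bigr => j _.
rewrite !mxE big_ord1 !mxE mulrACA -expr2 sqr_sqrtr ?ltW //.
Qed.

Lemma PhiT_entry (lam : 'I_d -> R) (u : 'cV[R]_n) j :
  ((Phi_train Z lam)^T *m u) j 0 = Num.sqrt (lam j) * (Z^T *m u) j 0.
Proof.
rewrite !mxE mulr_sumr; apply: eq_bigr => i _; rewrite !mxE mulrA //.
Qed.

End H.

Theorem lemma10 (R : rcfType) (n d : nat) (Z : 'M[R]_(n, d))
  (lam : 'I_d -> R) (t : 'I_d) (alpha : 'cV[R]_d) :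
  (n <= d)%N ->
  (forall j, 0 < lam j) ->
  Amat_minus Z lam t \in unitmx ->
  is_min_norm_solution (Phi_train Z lam) (col t Z) alpha ->
  CN lam t alpha = Num.sqrt (qform (Cmat Z lam t) (col t Z)) /\
  Num.sqrt (qform (Cmat Z lam t) (col t Z)) =
    `|1 - SU lam t alpha| * Num.sqrt (qform (Ctilde Z lam t) (col t Z)).
Proof.
move=> _ hl hAm [hsol hmin].
set z := col t Z.
set Am := Amat_minus Z lam t.
set A := Amat Z lam.
set S := Smat Z lam t.
set Phi := Phi_train Z lam.
have hA : A = Am + lam t *: outer z.
  rewrite /A /Amat (bigD1 t) //= addrC.
  done.
have AmT : Am^T = Am by rewrite /Am /Amat_minus sum_sym.
have AT : A^T = A by rewrite /A /Amat sum_sym.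
set B := invmx Am.
have BT : B^T = B by rewrite /B trmx_inv AmT.
set w := B *m z.
set q := (z^T *m w) 0 0.
have hz : Am *m w = z by rewrite /w /B mulKVmx.
have zT : z^T = w^T *m Am by rewrite -hz trmx_mul AmT.
have zB : z^T *m B = w^T by rewrite /w trmx_mul BT.
have hq : 0 <= q.
  rewrite /q zT /Am /Amat_minus qsum; apply: sumr_ge0 => j _.
  by rewrite -expr2 mulr_ge0 ?sqr_ge0 ?ltW.
have hq1 : 0 < 1 + lam t * q by have := mulr_ge0 (ltW (hl t)) hq; lra.
have zw : z *m (z^T *m w) = q *: z.
  by rewrite {1}(mx11_scalar (z^T *m w)) mul_mx_scalar.
have hAw : A *m w = (1 + lam t * q) *: z.
  rewrite hA mulmxDl hz -scalemxAl /outer -mulmxA zw scalerA scalerDl scale1r //.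
have hAu : A \in unitmx.
  pose M := B - (lam t / (1 + lam t * q)) *: (w *m w^T).
  suff : A *m M = 1%:M by case/mulmx1_unit.
  rewrite /M mulmxBr -scalemxAr mulmxA hAw hA mulmxDl mulmxV //.
  rewrite -scalemxAl /outer -mulmxA zB -scalemxAl scalerA.
  rewrite divfK ?gt_eqF //.
  by rewrite addrK.
set c := (1 + lam t * q)^-1.
set u := invmx A *m z.
have hu : u = c *: w.
  rewrite -[w in RHS](mulKmx hAu w) hAw -scalemxAr scalerA mulVf ?gt_eqF //.
  by rewrite scale1r.
have hPu : Phi *m (Phi^T *m u) = z by rewrite mulmxA PhiPhiT // /u mulKVmx.
have halpha : alpha = Phi^T *m u.
  set a0 := Phi^T *m u.
  have cross : (a0^T *m (alpha - a0)) 0 0 = 0.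
    by rewrite /a0 trmx_mul trmxK -mulmxA mulmxBr hsol hPu subrr mulmx0 mxE.
  have e : sqnorm alpha = sqnorm a0 + sqnorm (alpha - a0).
    have ea : alpha = a0 + (alpha - a0) by rewrite addrC subrK.
    by rewrite {1}ea (@sqnormD _ _ a0) cross mulr0 addr0.
  have := hmin a0 hPu; rewrite e => h.
  have h0 : sqnorm (alpha - a0) = 0 by have := @sqnorm_ge0 _ _ (alpha - a0); lra.
  by apply/eqP; rewrite -subr_eq0; apply/eqP; apply: sqnorm_eq0.
have uT : z^T *m invmx A = u^T by rewrite /u trmx_mul trmx_inv AT.
have qC : qform (Cmat Z lam t) z =
    \sum_(j < d | j != t) lam j ^+ 2 * ((Z^T *m u) j 0 * (Z^T *m u) j 0).
  have eC : z^T *m (invmx A *m S *m invmx A) *m z = u^T *m S *m u.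
    by rewrite !mulmxA uT.
  by rewrite /qform /Cmat eC /S /Smat qsum.
have qCt : qform (Ctilde Z lam t) z =
    \sum_(j < d | j != t) lam j ^+ 2 * ((Z^T *m w) j 0 * (Z^T *m w) j 0).
  have eC : z^T *m (B *m S *m B) *m z = w^T *m S *m w.
    by rewrite !mulmxA zB.
  by rewrite /qform /Ctilde eC /S /Smat qsum.
have hZu : Z^T *m u = c *: (Z^T *m w) by rewrite hu -scalemxAr.
have hZw : (Z^T *m w) t 0 = q by rewrite -colT_entry.
have hSU : 1 - SU lam t alpha = c.
  rewrite /SU halpha PhiT_entry mulrA -expr2 sqr_sqrtr ?ltW // hZu mxE hZw.
  rewrite /c; field; rewrite gt_eqF //.
split.
  rewrite /CN halpha qC; congr Num.sqrt; apply: eq_bigr => j _.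
  rewrite PhiT_entry exprMn sqr_sqrtr ?ltW //; ring.
rewrite hSU qC qCt hZu.
have -> : \sum_(j < d | j != t) lam j ^+ 2 * ((c *: (Z^T *m w)) j 0 * (c *: (Z^T *m w)) j 0)
  = c ^+ 2 * \sum_(j < d | j != t) lam j ^+ 2 * ((Z^T *m w) j 0 * (Z^T *m w) j 0).
  rewrite mulr_sumr; apply: eq_bigr => j _; rewrite !mxE; ring.
by rewrite sqrtrM ?sqr_ge0 // sqrtr_sqr.
Qed.
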